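(* For every integer $r\ge0$, $$D^r(\delta)(\tau)=\frac{1}{24^r}\left(-\tfrac32\right)^{\overline r}e\!\left(-\frac{x}{24}\right)\left(\frac{\pi y}{6}\right)^{\frac14-\frac r2}M_{\frac14-\frac r2,\frac34-\frac r2}\!\left(\frac{\pi y}{6}\right).$$
   Context: $\tau=x+iy\in\mathbb H$, $e(w)=e^{2\pi iw}$, $M_{\kappa,\mu}$ is the Whittaker $M$-function, $(x)^{\overline r}$ is the rising factorial, $\delta(\tau):=e(-\frac{x}{24})(\frac{\pi y}{6})^{1/4}M_{\frac14,\frac34}(\frac{\pi y}{6})$, and on smooth functions $D:=\frac{1}{2\pi i}\cdot\frac12\left(\frac{\partial}{\partial x}-i\frac{\partial}{\partial y}\right)$ (which equals $\frac{1}{2\pi i}\frac{d}{d\tau}$ on holomorphic functions). *)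

(* Defs.v *)
From Stdlib Require Import Reals Factorial.
From Coquelicot Require Import Coquelicot.
Open Scope R_scope.

Fixpoint rising (a : R) (n : nat) : R :=
  match n with O => 1 | S m => rising a m * (a + INR m) end.

(* Kummer's confluent hypergeometric function 1F1(a;b;z) = sum_n (a)_n/((b)_n n!) z^n
   (b not a non-positive integer). *)
Definition Kummer1F1 (a b z : R) : R :=
  Series (fun n => rising a n / (rising b n * INR (fact n)) * z ^ n).

(* Whittaker M-function (DLMF 13.14.2) for real parameters and real z > 0:
   M_{kappa,mu}(z) = e^{-z/2} z^{mu+1/2} 1F1(mu-kappa+1/2; 1+2mu; z). *)
Definition WhittakerM (kappa mu z : R) : R :=
  exp (- z / 2) * Rpower z (mu + 1/2) * Kummer1F1 (mu - kappa + 1/2) (1 + 2 * mu) z.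

Definition e (w : R) : C := (cos (2 * PI * w), sin (2 * PI * w)).

(* Complex-valued functions of tau = x + i y, written as functions of (x, y). *)
Definition cfun := R -> R -> C.

Definition dx (f : cfun) : cfun := fun x y =>
  (Derive (fun t => fst (f t y)) x, Derive (fun t => snd (f t y)) x).
Definition dy (f : cfun) : cfun := fun x y =>
  (Derive (fun t => fst (f x t)) y, Derive (fun t => snd (f x t)) y).

Definition Dop (f : cfun) : cfun := fun x y =>
  Cmult (Cinv (Cmult (RtoC (2 * PI)) Ci))
        (Cmult (RtoC (1/2)) (Cminus (dx f x y) (Cmult Ci (dy f x y)))).

Definition Dpow (r : nat) (f : cfun) : cfun := Nat.iter r Dop f.

Definition delta : cfun := fun x y =>
  Cmult (e (- x / 24))
        (RtoC (Rpower (PI * y / 6) (1/4) * WhittakerM (1/4) (3/4) (PI * y / 6))).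

(* Main.v *)
Require Import Defs.
From Stdlib Require Import Reals Lra Lia Factorial.
From Coquelicot Require Import Coquelicot.
Open Scope R_scope.

Lemma loc_pos y0 : 0 < y0 -> locally y0 (fun t => 0 < t).
Proof. intros hy. apply (locally_interval _ y0 0 p_infty); simpl; auto. Qed.

Lemma Dop_step (f : cfun) (A : R -> R) x y0 Ad : 0 < y0 ->
  (forall x y, 0 < y -> f x y = Cmult (e (- x / 24)) (RtoC (A y))) ->
  is_derive A y0 Ad ->
  Dop f x y0 = Cmult (e (- x / 24)) (RtoC (- (A y0 / 48 + Ad / (4 * PI)))).
Proof.
  intros hy hf hA. unfold Dop, dx, dy.
  set (th := fun t => 2 * PI * (- t / 24)).
  assert (E1 : Derive (fun t => fst (f t y0)) x = - (2*PI/24) * sin (th x) * A y0 * (-1) ).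
  { rewrite (Derive_ext _ (fun t => cos (th t) * A y0 - sin (th t) * 0)).
    2:{ intros t. rewrite hf; auto. }
    apply is_derive_unique. unfold th. auto_derive; auto. unfold Rdiv; ring. }
  assert (E2 : Derive (fun t => snd (f t y0)) x = (2*PI/24) * cos (th x) * A y0 * (-1)).
  { rewrite (Derive_ext _ (fun t => cos (th t) * 0 + sin (th t) * A y0)).
    2:{ intros t. rewrite hf; auto. }
    apply is_derive_unique. unfold th. auto_derive; auto. unfold Rdiv; ring. }
  assert (E3 : Derive (fun t => fst (f x t)) y0 = cos (th x) * Ad).
  { rewrite (Derive_ext_loc _ (fun t => cos (th x) * A t)).
    2:{ eapply filter_imp. 2: apply (loc_pos _ hy). intros t ht. rewrite hf; auto. simpl. unfold th. ring. }
    apply is_derive_unique. apply is_derive_scal. auto. }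
  assert (E4 : Derive (fun t => snd (f x t)) y0 = sin (th x) * Ad).
  { rewrite (Derive_ext_loc _ (fun t => sin (th x) * A t)).
    2:{ eapply filter_imp. 2: apply (loc_pos _ hy). intros t ht. rewrite hf; auto. simpl. unfold th. ring. }
    apply is_derive_unique. apply is_derive_scal. auto. }
  rewrite E1, E2, E3, E4. unfold e. fold (th x).
  assert (PI <> 0) by (generalize PI_RGT_0; lra).
  unfold Cinv, Cmult, Cminus, Cplus, Copp, Ci, RtoC; simpl.
  f_equal; field; auto.
Qed.

Definition kc (b : R) (n : nat) : R := rising 1 n / (rising b n * INR (fact n)).
Definition Fk (b z : R) : R := PSeries (kc b) z.

Lemma rising_shift p n : rising p (S n) = p * rising (p+1) n.
Proof.
  induction n as [|n IH].
  - simpl. ring.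
  - change (rising p (S (S n))) with (rising p (S n) * (p + INR (S n))).
    rewrite IH. simpl. destruct n; simpl; ring.
Qed.

Lemma rising_nz p n : (forall k, p + INR k <> 0) -> rising p n <> 0.
Proof.
  intros H. induction n as [|n IH]; simpl.
  - lra.
  - apply Rmult_integral_contrapositive; split; auto.
Qed.

Lemma one_ok : forall k, 1 + INR k <> 0.
Proof. intros k. generalize (pos_INR k). lra. Qed.

Lemma half_ok (m r : nat) : Nat.odd m = true -> forall k, INR m / 2 - INR r + INR k <> 0.
Proof.
  intros Hm k H.
  assert (INR m + 2 * INR k = 2 * INR r) by lra.
  assert (INR (m + 2 * k) = INR (2 * r)) by (rewrite plus_INR, !mult_INR; simpl; lra).
  apply INR_eq in H1.
  rewrite <- Nat.negb_even in Hm.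
  assert (Nat.even (m + 2*k) = Nat.even (2*r)) by (rewrite H1; auto).
  rewrite Nat.even_add, !Nat.even_mul in H2. simpl in H2.
  destruct (Nat.even m); simpl in *; discriminate.
Qed.

Lemma kc_nz b n : (forall k, b + INR k <> 0) -> kc b n <> 0.
Proof.
  intros Hb. unfold kc.
  generalize (rising_nz 1 n one_ok) (rising_nz b n Hb) (INR_fact_neq_0 n); intros.
  unfold Rdiv. apply Rmult_integral_contrapositive; split; auto.
  apply Rinv_neq_0_compat. apply Rmult_integral_contrapositive; split; auto.
Qed.

Lemma kc_radius b : (forall k, b + INR k <> 0) -> CV_radius (kc b) = p_infty.
Proof.
  intros Hb. apply CV_radius_infinite_DAlembert.
  - intros n. apply kc_nz; auto.
  - apply is_lim_seq_ext with (fun n => Rabs (/ (b + INR n))).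
    + intros n. f_equal. unfold kc.
      generalize (rising_nz 1 n one_ok) (rising_nz b n Hb) (INR_fact_neq_0 n) (one_ok n) (Hb n); intros.
      change (rising 1 (S n)) with (rising 1 n * (1 + INR n)).
      change (rising b (S n)) with (rising b n * (b + INR n)).
      rewrite fact_simpl, mult_INR, S_INR. field. repeat split; auto.
      replace (INR n + 1) with (1 + INR n) by ring; auto.
    + replace (Finite 0) with (Rbar_abs (Rbar_inv p_infty)) by (simpl; f_equal; apply Rabs_R0).
      apply is_lim_seq_abs. apply is_lim_seq_inv; [|discriminate].
      eapply is_lim_seq_plus. apply is_lim_seq_const. apply is_lim_seq_INR. simpl. constructor.
Qed.

Lemma coef_id p n : (forall k, p + INR k <> 0) ->
  PS_plus (PS_scal p (kc (p+1))) (PS_incr_1 (PS_derive (kc (p+1)))) n = PS_scal p (kc p) n.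
Proof.
  intros Hp.
  assert (Hp1 : forall k, p + 1 + INR k <> 0).
  { intros k. replace (p + 1 + INR k) with (p + INR (S k)) by (rewrite S_INR; ring). auto. }
  unfold PS_plus, PS_scal, PS_incr_1, PS_derive. destruct n as [|m].
  - unfold kc; simpl. change (plus (p * (1 / (1 * 1))) 0 = p * (1 / (1 * 1))). unfold plus; simpl. ring.
  - change (p * kc (p+1) (S m) + INR (S m) * kc (p+1) (S m) = p * kc p (S m)).
    unfold kc.
    generalize (rising_nz 1 (S m) one_ok) (rising_nz p (S m) Hp) (rising_nz (p+1) (S m) Hp1) (INR_fact_neq_0 (S m)) (Hp (S m)); intros.
    assert (E : p * rising (p+1) (S m) = rising p (S m) * (p + INR (S m))).
    { rewrite <- rising_shift. reflexivity. }
    assert (p <> 0) by (generalize (Hp 0%nat); simpl; lra).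
    assert (Eq : rising (p+1) (S m) = rising p (S m) * (p + INR (S m)) / p).
    { rewrite <- E. field. auto. }
    rewrite Eq. field. repeat split; auto.
Qed.

Lemma h_deriv p z : 0 < z -> (forall k, p + INR k <> 0) ->
  is_derive (fun t => Rpower t p * Fk (p+1) t) z (p * Rpower z (p-1) * Fk p z).
Proof.
  intros hz Hp.
  assert (Hp1 : forall k, p + 1 + INR k <> 0).
  { intros k. replace (p + 1 + INR k) with (p + INR (S k)) by (rewrite S_INR; ring). auto. }
  set (a := kc (p+1)).
  assert (Ra : CV_radius a = p_infty) by (apply kc_radius; auto).
  assert (Rlt_a : Rbar_lt (Rabs z) (CV_radius a)) by (rewrite Ra; simpl; auto).
  assert (D1 : is_derive (fun t => Rpower t p) z (p * Rpower z (p-1))).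
  { apply is_derive_Reals. apply derivable_pt_lim_power. auto. }
  assert (D2 : is_derive (Fk (p+1)) z (PSeries (PS_derive a) z)).
  { apply is_derive_PSeries. auto. }
  assert (Hval : p * Rpower z (p - 1) * Fk (p + 1) z + Rpower z p * PSeries (PS_derive a) z
                 = p * Rpower z (p-1) * Fk p z).
  { replace (Rpower z p) with (Rpower z (p-1) * z)
      by (rewrite <- (Rpower_1 z) at 2; auto; rewrite <- Rpower_plus; f_equal; ring).
    assert (Key : p * Fk (p+1) z + z * PSeries (PS_derive a) z = p * Fk p z).
    2:{ transitivity (Rpower z (p-1) * (p * Fk (p+1) z + z * PSeries (PS_derive a) z)); [ring|].
        rewrite Key; ring. }
    assert (Ex1 : ex_pseries a z) by (apply CV_radius_inside; auto).
    assert (Ex2 : ex_pseries (PS_derive a) z) by (apply CV_radius_inside; rewrite CV_radius_derive; auto).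
    rewrite <- PSeries_incr_1. unfold Fk. fold a. rewrite <- PSeries_scal.
    rewrite <- PSeries_plus.
    2:{ apply ex_pseries_scal; auto. apply Rmult_comm. }
    2:{ apply ex_pseries_incr_1; auto. }
    rewrite <- PSeries_scal. apply PSeries_ext. intros n. apply coef_id. auto. }
  pose proof (is_derive_mult _ _ _ _ _ D1 D2 Rmult_comm) as H.
  change (is_derive (fun t => Rpower t p * Fk (p + 1) t) z
           (p * Rpower z (p - 1) * Fk (p + 1) z + Rpower z p * PSeries (PS_derive a) z)) in H.
  rewrite Hval in H. exact H.
Qed.

Definition B (r : nat) (y : R) : R :=
  / 24 ^ r * rising (-3/2) r *
  (exp (- (PI * y / 6) / 2) * (Rpower (PI * y / 6) (3/2 - INR r) * Fk (5/2 - INR r) (PI * y / 6))).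

Lemma p_ok r : forall k, 3/2 - INR r + INR k <> 0.
Proof. intros k. replace (3/2) with (INR 3 / 2) by (simpl; lra). apply half_ok. reflexivity. Qed.

Lemma B_deriv r y : 0 < y -> exists Bd, is_derive (B r) y Bd /\ - (B r y / 48 + Bd / (4 * PI)) = B (S r) y.
Proof.
  intros hy.
  set (p := 3/2 - INR r).
  set (C := / 24 ^ r * rising (-3/2) r).
  set (hf := fun t => Rpower t p * Fk (p+1) t).
  assert (HB : forall t, B r t = C * (exp (- (PI * t / 6) / 2) * hf (PI * t / 6))).
  { intros t. unfold B, hf, C, p. replace (5/2 - INR r) with (3/2 - INR r + 1) by lra. reflexivity. }
  set (z := PI * y / 6).
  assert (hz : 0 < z) by (unfold z; generalize PI_RGT_0; intro; apply Rdiv_lt_0_compat; [apply Rmult_lt_0_compat|]; lra).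
  pose proof (h_deriv p z hz (p_ok r)) as Dh.
  assert (Dhc : is_derive (fun t => hf (PI * t / 6)) y (PI / 6 * (p * Rpower z (p-1) * Fk p z))).
  { apply (is_derive_comp hf (fun t => PI * t / 6) y _ (PI/6)). exact Dh.
    auto_derive; auto. field. }
  assert (De : is_derive (fun t => exp (- (PI * t / 6) / 2)) y (- (PI / 12) * exp (- z / 2))).
  { auto_derive; auto. unfold z. replace (exp (- (PI * y * / 6) * / 2)) with (exp (- (PI * y / 6) / 2)) by reflexivity. field. }
  pose proof (is_derive_mult _ _ _ _ _ De Dhc Rmult_comm) as Dm.
  pose proof (is_derive_scal _ _ C _ Dm) as Ds.
  eexists. split.
  - eapply is_derive_ext. 2: exact Ds. intros t. rewrite HB. reflexivity.
  - rewrite HB. fold z. unfold B. rewrite S_INR.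
    replace (3 / 2 - (INR r + 1)) with (p - 1) by (unfold p; lra).
    replace (5 / 2 - (INR r + 1)) with p by (unfold p; lra).
    fold z.
    change (rising (-3/2) (S r)) with (rising (-3/2) r * (-3/2 + INR r)).
    change (24 ^ S r) with (24 * 24 ^ r).
    replace (-3/2 + INR r) with (- p) by (unfold p; lra).
    unfold C, hf. simpl plus. simpl mult.
    assert (PI <> 0) by (generalize PI_RGT_0; lra).
    assert (24 ^ r <> 0) by (apply pow_nonzero; lra).
    unfold plus, mult; simpl. field. auto.
Qed.

Lemma WB r z : 0 < z ->
  Rpower z (1/4 - INR r / 2) * WhittakerM (1/4 - INR r / 2) (3/4 - INR r / 2) z
  = exp (- z / 2) * (Rpower z (3/2 - INR r) * Fk (5/2 - INR r) z).
Proof.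
  intros hz. unfold WhittakerM.
  replace (3/4 - INR r / 2 - (1/4 - INR r / 2) + 1/2) with 1 by lra.
  replace (1 + 2 * (3/4 - INR r / 2)) with (5/2 - INR r) by lra.
  change (Kummer1F1 1 (5/2 - INR r) z) with (Fk (5/2 - INR r) z).
  replace (Rpower z (3/2 - INR r)) with (Rpower z (1/4 - INR r / 2) * Rpower z (3/4 - INR r / 2 + 1/2))
    by (rewrite <- Rpower_plus; f_equal; lra).
  ring.
Qed.

Lemma Dpow_form r : forall x y, 0 < y -> Dpow r delta x y = Cmult (e (- x / 24)) (RtoC (B r y)).
Proof.
  induction r as [|r IH]; intros x y hy.
  - simpl. unfold delta. f_equal. f_equal. unfold B.
    assert (hz : 0 < PI * y / 6) by (generalize PI_RGT_0; intro; apply Rdiv_lt_0_compat; [apply Rmult_lt_0_compat|]; lra).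
    rewrite <- (WB 0 _ hz). simpl INR.
    replace (1/4 - 0/2) with (1/4) by lra. replace (3/4 - 0/2) with (3/4) by lra.
    simpl. field.
  - destruct (B_deriv r y hy) as [Bd [HD HE]].
    change (Dpow (S r) delta x y) with (Dop (Dpow r delta) x y).
    rewrite (Dop_step _ (B r) x y Bd hy IH HD). rewrite HE. reflexivity.
Qed.

Theorem mainTheorem9 (r : nat) (x y : R) (hy : 0 < y) :
  Dpow r delta x y =
  Cmult (RtoC (/ 24 ^ r * rising (- 3 / 2) r))
    (Cmult (e (- x / 24))
       (RtoC (Rpower (PI * y / 6) (1/4 - INR r / 2) *
              WhittakerM (1/4 - INR r / 2) (3/4 - INR r / 2) (PI * y / 6)))).
Proof.
  rewrite Dpow_form; auto.
  assert (hz : 0 < PI * y / 6) by (generalize PI_RGT_0; intro; apply Rdiv_lt_0_compat; [apply Rmult_lt_0_compat|]; lra).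
  rewrite (WB r _ hz). unfold B.
  unfold Cmult, RtoC; simpl. f_equal; ring.
Qed.
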